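(* Let $\Gamma$ be a countable discrete group and $\rho\colon\Gamma\times X\to X$ a free measure preserving action on a standard probability space $(X,\mu)$, with orbit equivalence relation $R_\rho\subset X\times X$. The natural inclusion $\iota\colon L^\infty(X)\rtimes_{\mathrm{alg}}\Gamma\to R_\rho(X)$ induces an isomorphism $c(\iota)$ on completions with respect to the rank metric.
   Context: $L^\infty(X)\rtimes_{\mathrm{alg}}\Gamma$ is the algebraic crossed product (finite sums $\sum f_gu_g$, $f_g\in L^\infty(X)$). For a discrete measurable equivalence relation $R$ on $(X,\mu)$, $L^\infty(R)$ denotes its (Feldman–Moore) von Neumann algebra, and the relation ring is $R(X)=\{\sum_{i=1}^n f_i\phi_i\colon f_i\in L^\infty(X),\ \phi_i \text{ a partial (local) isomorphism whose graph lies in } R\}\subset L^\infty(R)$. Any left $L^\infty(X)$-module $L$ is regarded as an $L^\infty(X)$-bimodule with both actions equal to the given left action (''diagonal left action''); the rank of $\xi\in L$ is $[\xi]=\inf\{\tau(p)+\tau(q)\colon p,q \text{ projections in } L^\infty(X),\ (1-p)(1-q)\xi=0\}$ with $\tau(f)=\int f\,d\mu$, the rank metric is $d(\xi,\zeta)=[\xi-\zeta]$, and $c(L)$ denotes the completion (Cauchy sequences modulo null sequences). Both $L^\infty(X)\rtimes_{\mathrm{alg}}\Gamma$ and $R_\rho(X)$ are left $L^\infty(X)$-modules by left multiplication. *)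

(* Defs.v *)
From HB Require Import structures.
From mathcomp Require Import all_boot all_algebra.
From mathcomp Require Import all_classical all_reals all_analysis.
From mathcomp Require Import complex.

Set Implicit Arguments.
Unset Strict Implicit.
Unset Printing Implicit Defensive.

Import GRing.Theory Num.Theory.
Local Open Scope classical_set_scope.
Local Open Scope ring_scope.

(* X is standard Borel: Borel isomorphic to a Borel subset of R. *)
Definition standard_borel (R : realType) {d : measure_display}
  (X : measurableType d) : Prop :=
  exists e : X -> R, injective e /\ measurable_fun setT e /\
    forall A : set X, measurable A -> measurable (e @` A).

Section RankCompletion.
Context (R : realType) {d : measure_display} (X : measurableType d)
  (mu : probability X R).
Local Notation C := R[i].

(* representatives of elements of L^oo(X) (complex valued, bounded,
   measurable); a.e.-equality is taken care of by the zero predicates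
   below *)
Definition Linf (f : X -> C) : Prop :=
  measurable_fun setT (fun x => complex.Re (f x)) /\
  measurable_fun setT (fun x => complex.Im (f x)) /\
  exists M : R, forall x, `|complex.Re (f x)| <= M /\ `|complex.Im (f x)| <= M.

Definition one_minus_proj (P : set X) : X -> C :=
  fun x => Complex (\1_(~` P) x : R) 0.

Record lmodLinf := LmodLinf {
  lm_car : Type;
  lm_valid : lm_car -> Prop;
  lm_sub : lm_car -> lm_car -> lm_car;
  lm_mul : (X -> C) -> lm_car -> lm_car;
  lm_zero : lm_car -> Prop }.

(* rank of xi, for the diagonal bimodule structure:
   inf { tau(p) + tau(q) : (1-p)(1-q) xi = 0 } *)
Definition rank (M : lmodLinf) (xi : lm_car M) : \bar R :=
  ereal_inf [set r | exists P Q : set X, measurable P /\ measurable Q /\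
     lm_zero (lm_mul (one_minus_proj P) (lm_mul (one_minus_proj Q) xi)) /\
     r = (mu P + mu Q)%E].

Definition rk_cauchy (M : lmodLinf) (s : nat -> lm_car M) : Prop :=
  (forall n, lm_valid (s n)) /\
  forall e : R, 0 < e -> exists N : nat, forall n m : nat,
    (N <= n)%N -> (N <= m)%N -> (rank (lm_sub (s n) (s m)) < e%:E)%E.

Definition rk_equiv (M : lmodLinf) (s t : nat -> lm_car M) : Prop :=
  forall e : R, 0 < e -> exists N : nat, forall n : nat,
    (N <= n)%N -> (rank (lm_sub (s n) (t n)) < e%:E)%E.

(* The map c(f) : c(M) -> c(N), [s] |-> [f o s], on completions
   (Cauchy sequences modulo null sequences) is well defined and bijective. *)
Definition completion_iso (M N : lmodLinf) (f : lm_car M -> lm_car N) : Prop :=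
  [/\ (forall s, rk_cauchy s -> rk_cauchy (f \o s)),
      (forall s t, rk_cauchy s -> rk_cauchy t -> rk_equiv s t ->
         rk_equiv (f \o s) (f \o t)),
      (forall s t, rk_cauchy s -> rk_cauchy t -> rk_equiv (f \o s) (f \o t) ->
         rk_equiv s t)
    & (forall u, rk_cauchy u -> exists2 s, rk_cauchy s & rk_equiv (f \o s) u)].

Context (G : groupType) (rho : G -> X -> X).

Definition mp_action : Prop :=
  [/\ (forall x, rho monoid.one x = x),
      (forall g h x, rho (monoid.mul g h) x = rho g (rho h x)),
      (forall g, measurable_fun setT (rho g))
    & (forall g A, measurable A -> mu (rho g @^-1` A) = mu A)].

Definition free_action : Prop :=
  forall g x, rho g x = x -> g = monoid.one.

Definition orbit_rel (x y : X) : Prop := exists g, y = rho g x.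

Definition partial_iso (phi : X -> X) (A : set X) : Prop :=
  [/\ measurable A, measurable_fun A phi,
      (forall x y, A x -> A y -> phi x = phi y -> x = y),
      (forall B, measurable B -> B `<=` A ->
         measurable (phi @` B) /\ mu (phi @` B) = mu B)
    & (forall x, A x -> orbit_rel x (phi x))].

(* a finite formal sum  \sum f_g u_g,  represented by a list of (g, f_g) *)
Definition cp_car := seq (G * (X -> C)).

Definition cp_valid (xi : cp_car) : Prop := forall p, p \in xi -> Linf p.2.

Definition cp_sub (xi zeta : cp_car) : cp_car :=
  xi ++ map (fun p => (p.1, fun x => - p.2 x)) zeta.

Definition cp_mul (f : X -> C) (xi : cp_car) : cp_car :=
  map (fun p => (p.1, fun x => f x * p.2 x)) xi.

Definition cp_zero (xi : cp_car) : Prop :=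
  forall g : G, {ae mu, forall x, \sum_(p <- xi | p.1 == g) p.2 x = 0}.

Definition cp_mod : lmodLinf := LmodLinf cp_valid cp_sub cp_mul cp_zero.

(* a finite sum \sum f_i phi_i, represented by a list of (f_i, (phi_i, dom phi_i)) *)
Definition rr_car := seq ((X -> C) * ((X -> X) * set X)).

Definition rr_valid (xi : rr_car) : Prop :=
  forall p, p \in xi -> Linf p.1 /\ partial_iso p.2.1 p.2.2.

Definition rr_sub (xi zeta : rr_car) : rr_car :=
  xi ++ map (fun p => (fun x => - p.1 x, p.2)) zeta.

Definition rr_mul (f : X -> C) (xi : rr_car) : rr_car :=
  map (fun p => (fun x => f x * p.1 x, p.2)) xi.

(* matrix (kernel) of \sum f_i phi_i as an element of L^oo(R_rho):
   (f phi)(x, y) = f(x) if y \in dom phi and phi y = x, and 0 otherwise *)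
Definition rr_kernel (xi : rr_car) (x y : X) : C :=
  \sum_(p <- xi) (if `[< p.2.2 y /\ p.2.1 y = x >] then p.1 x else 0).

(* zero in L^oo(R_rho): the kernel vanishes a.e. for the counting measure
   on R_rho, i.e. for mu-a.e. x it vanishes on the whole fiber *)
Definition rr_zero (xi : rr_car) : Prop :=
  {ae mu, forall x, forall y, rr_kernel xi x y = 0}.

Definition rr_mod : lmodLinf := LmodLinf rr_valid rr_sub rr_mul rr_zero.

Definition iota_incl (xi : lm_car cp_mod) : lm_car rr_mod :=
  map (fun p => (p.2, (rho p.1, setT))) xi.

End RankCompletion.


Arguments completion_iso {R d X} mu M N f.

(* Main.v *)
Set Warnings "-all".
Require Import Defs.
From HB Require Import structures.
From mathcomp Require Import all_boot all_algebra.
From mathcomp Require Import all_classical all_reals all_analysis.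
From mathcomp Require Import complex.
From mathcomp Require Import all_order ring lra measurable_realfun.
Import Order.TTheory GRing.Theory Num.Theory.
Local Open Scope classical_set_scope.
Local Open Scope ring_scope.

Section S.
Context (R : realType) (d : measure_display) (X : measurableType d)
  (mu : probability X R).
Local Notation C := R[i].
Local Notation omp := (@one_minus_proj R d X).

Lemma omp_in (P : set X) x : P x -> omp P x = 0 :> C.
Proof.
move=> Px; rewrite /omp /one_minus_proj indicE.
have -> : (x \in ~` P) = false by apply/negbTE/negP; rewrite in_setE.
by [].
Qed.

Lemma omp_out (P : set X) x : ~ P x -> omp P x = 1 :> C.
Proof.
move=> Px; rewrite /omp /one_minus_proj indicE.
have -> : (x \in ~` P) = true by apply/idP; rewrite in_setE.
by [].
Qed.

Lemma omp_zero (P Q : set X) x (k : C) :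
  (omp P x * (omp Q x * k) = 0) <-> (~ P x -> ~ Q x -> k = 0).
Proof.
split.
- by move=> h nP nQ; move: h; rewrite omp_out // omp_out // !mul1r.
- move=> h; have [Px|nP] := pselect (P x); first by rewrite omp_in // mul0r.
  have [Qx|nQ] := pselect (Q x); first by rewrite (omp_in Q x Qx) mul0r mulr0.
  by rewrite h // !mulr0.
Qed.

Lemma rank_ltP (M : lmodLinf R X) (xi : lm_car M) (e : R) :
  (rank mu xi < e%:E)%E <-> exists P Q : set X, [/\ measurable P, measurable Q,
     lm_zero (lm_mul (omp P) (lm_mul (omp Q) xi)) &
     (mu P + mu Q < e%:E)%E].
Proof.
split.
- move=> /ereal_inf_lt [r [P [Q [mP [mQ [z ->]]]]]] lt.
  by exists P, Q; split.
- move=> [P [Q [mP mQ z lt]]].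
  apply: (le_lt_trans _ lt); apply: ereal_inf_lbound.
  by exists P, Q.
Qed.


Context (G : groupType) (rho : G -> X -> X).

Lemma rr_kernel_mul f (xi : rr_car R X) x y :
  rr_kernel (rr_mul f xi) x y = f x * rr_kernel xi x y.
Proof.
rewrite /rr_kernel /rr_mul big_map mulr_sumr; apply: eq_bigr => p _ /=.
by case: ifP; rewrite ?mulr0.
Qed.

Lemma rr_zero_iff P Q (xi : lm_car (rr_mod mu rho)) :
  lm_zero (lm_mul (omp P) (lm_mul (omp Q) xi)) <->
  {ae mu, forall x, ~ P x -> ~ Q x -> forall y, rr_kernel xi x y = 0}.
Proof.
rewrite /= /rr_zero; split; apply: filterS => x h.
- move=> nP nQ y; move: (h y); rewrite !rr_kernel_mul.
  by move/omp_zero; apply.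
- by move=> y; rewrite !rr_kernel_mul; apply/omp_zero => nP nQ; apply: h.
Qed.

Definition csum (xi : cp_car R X G) g x : C := \sum_(p <- xi | p.1 == g) p.2 x.

Lemma csum_mul f xi g x : csum (cp_mul f xi) g x = f x * csum xi g x.
Proof. by rewrite /csum /cp_mul big_map mulr_sumr. Qed.

Lemma ae_seq (A : G -> X -> Prop) (s : seq G) :
  (forall g, {ae mu, forall x, A g x}) ->
  {ae mu, forall x, forall g, g \in s -> A g x}.
Proof.
move=> h; elim: s => [|g s ih]; first by apply: aeW => x g.
apply: filterS2 (h g) ih => x hg hs g'; rewrite inE => /orP[/eqP->//|].
exact: hs.
Qed.

Lemma cp_zero_iff P Q (xi : lm_car (cp_mod mu G)) :
  lm_zero (lm_mul (omp P) (lm_mul (omp Q) xi)) <->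
  {ae mu, forall x, ~ P x -> ~ Q x -> forall g, csum xi g x = 0}.
Proof.
rewrite /= /cp_zero; split.
- move=> h.
  have := @ae_seq (fun g x => ~ P x -> ~ Q x -> csum xi g x = 0) (map fst xi).
  move=> /(_ _) H; apply: filterS (H _) => [x hx nP nQ g|g].
  + have [gin|gnin] := boolP (g \in map fst xi); first exact: hx.
    rewrite /csum big1_seq // => p /andP[/eqP pg pin].
    by move: gnin; rewrite -pg map_f.
  + by apply: filterS (h g) => x; rewrite -!/(csum _ g x) !csum_mul => /omp_zero.
- move=> h g; apply: filterS h => x hx.
  by rewrite -!/(csum _ g x) !csum_mul; apply/omp_zero => nP nQ; apply: hx.
Qed.


Local Notation iota := (@iota_incl R d X mu G rho).
Local Open Scope group_scope.

Lemma rho_one (HA : mp_action mu rho) x : rho 1 x = x.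
Proof. by case: HA. Qed.

Lemma rho_mul (HA : mp_action mu rho) g h x : rho (g * h) x = rho g (rho h x).
Proof. by case: HA. Qed.

Lemma rho_K (HA : mp_action mu rho) g x : rho g^-1 (rho g x) = x.
Proof. by rewrite -rho_mul // mulVg rho_one. Qed.

Lemma rho_Kv (HA : mp_action mu rho) g x : rho g (rho g^-1 x) = x.
Proof. by rewrite -rho_mul // mulgV rho_one. Qed.

Lemma rho_eq (HA : mp_action mu rho) (HF : free_action rho) g h y :
  rho g y = rho h y -> g = h.
Proof.
move=> e; have : rho (h^-1 * g) y = y by rewrite rho_mul // e rho_K.
move/HF => e1; by rewrite -[g]mul1g -(mulgV h) -mulgA e1 mulg1.
Qed.

Lemma iota_kernel_csum xi x y g :
  (forall h, rho h y = x <-> h = g) ->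
  rr_kernel (iota xi) x y = csum xi g x.
Proof.
move=> H; rewrite /rr_kernel /iota_incl big_map /csum [RHS]big_mkcond /=.
apply: eq_bigr => p _; congr (if _ then _ else _).
apply/asboolP/eqP => [[_ /H]//|/H e]; by split.
Qed.

Lemma iota_kernel0 xi x y :
  (forall h, rho h y <> x) -> rr_kernel (iota xi) x y = 0%R.
Proof.
move=> H; rewrite /rr_kernel /iota_incl big_map big1 // => p _ /=.
by case: asboolP => // -[_ /H].
Qed.

Lemma iota_kernel_iff (HA : mp_action mu rho) (HF : free_action rho) xi x :
  (forall y, rr_kernel (iota xi) x y = 0%R) <-> (forall g, csum xi g x = 0%R).
Proof.
split.
- move=> h g; rewrite -(h (rho g^-1 x)); symmetry; apply: iota_kernel_csum => k.
  split => [e|->]; last exact: rho_Kv.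
  by apply: (rho_eq HA HF k g (rho g^-1 x)); rewrite e rho_Kv.
- move=> h y; have [[g0 e0]|nex] := pselect (exists g0, rho g0 y = x).
  + rewrite (@iota_kernel_csum _ _ _ g0) // => k; split => [e|->//].
    by apply: (rho_eq HA HF k g0 y); rewrite e e0.
  + by apply: iota_kernel0 => k e; apply: nex; exists k.
Qed.

Lemma rank_iota (HA : mp_action mu rho) (HF : free_action rho) (xi : lm_car (cp_mod mu G)) :
  rank mu (M := rr_mod mu rho) (iota xi) = rank mu (M := cp_mod mu G) xi.
Proof.
rewrite /rank; congr ereal_inf; apply/funext => r; apply/propext.
split => -[P [Q [mP [mQ [z ->]]]]]; exists P, Q; do 3 split => //.
- apply/cp_zero_iff; move/rr_zero_iff: z; apply: filterS => x h nP nQ.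
  by apply/(iota_kernel_iff HA HF); apply: h.
- apply/rr_zero_iff; move/cp_zero_iff: z; apply: filterS => x h nP nQ.
  by apply/(iota_kernel_iff HA HF); apply: h.
Qed.


Local Close Scope group_scope.
Local Notation rkR := (@rank R d X mu (rr_mod mu rho)).
Local Notation rkC := (@rank R d X mu (cp_mod mu G)).
Local Notation K := (@rr_kernel R d X).

Lemma rr_rank2 (a b xi : rr_car R X) (e1 e2 : R) :
  (forall x, (forall y, K a x y = 0) -> (forall y, K b x y = 0) ->
     forall y, K xi x y = 0) ->
  (rkR a < e1%:E)%E -> (rkR b < e2%:E)%E -> (rkR xi < (e1 + e2)%:E)%E.
Proof.
move=> H /rank_ltP [P1 [Q1 [mP1 mQ1 z1 l1]]] /rank_ltP [P2 [Q2 [mP2 mQ2 z2 l2]]].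
apply/rank_ltP; exists ((P1 `|` Q1) `|` (P2 `|` Q2)), set0; split.
- by apply: measurableU; apply: measurableU.
- exact: measurable0.
- apply/rr_zero_iff; move/rr_zero_iff: z1 => z1; move/rr_zero_iff: z2 => z2.
  apply: filterS2 z1 z2 => x h1 h2 nP _; apply: H.
  + by apply: h1 => p; apply: nP; left; [left|right].
  + by apply: h2 => p; apply: nP; right; [left|right].
- rewrite measure0 adde0 EFinD.
  apply: (le_lt_trans (measureU2 _ _ _)); first by apply: measurableU.
    by apply: measurableU.
  apply: lteD; apply: le_lt_trans _ (l1) || apply: le_lt_trans _ (l2);
  exact: measureU2.
Qed.

Lemma rr_rank1 (a xi : rr_car R X) (e : R) :
  (forall x, (forall y, K a x y = 0) -> forall y, K xi x y = 0) ->
  (rkR a < e%:E)%E -> (rkR xi < e%:E)%E.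
Proof.
move=> H /rank_ltP [P1 [Q1 [mP1 mQ1 z1 l1]]].
apply/rank_ltP; exists P1, Q1; split => //.
apply/rr_zero_iff; move/rr_zero_iff: z1; apply: filterS => x h1 nP nQ.
by apply: H; apply: h1.
Qed.

Lemma K_sub (a b : rr_car R X) x y : K (rr_sub a b) x y = K a x y - K b x y.
Proof.
rewrite /rr_kernel /rr_sub big_cat big_map /= -sumrN; congr (_ + _).
by apply: eq_bigr => p _; case: ifP => //; rewrite oppr0.
Qed.

Lemma K_cat (a b : rr_car R X) x y : K (a ++ b) x y = K a x y + K b x y.
Proof. by rewrite /rr_kernel big_cat. Qed.

Lemma K_cons p (u : rr_car R X) x y : K (p :: u) x y = K [:: p] x y + K u x y.
Proof. by rewrite /rr_kernel big_cons big_seq1. Qed.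

Lemma rr_rank3 (a b c xi : rr_car R X) (e1 e2 e3 : R) :
  (forall x, (forall y, K a x y = 0) -> (forall y, K b x y = 0) ->
     (forall y, K c x y = 0) -> forall y, K xi x y = 0) ->
  (rkR a < e1%:E)%E -> (rkR b < e2%:E)%E -> (rkR c < e3%:E)%E ->
  (rkR xi < (e1 + e2 + e3)%:E)%E.
Proof.
move=> H /rank_ltP [P1 [Q1 [mP1 mQ1 z1 l1]]] /rank_ltP [P2 [Q2 [mP2 mQ2 z2 l2]]].
move=> /rank_ltP [P3 [Q3 [mP3 mQ3 z3 l3]]].
apply/rank_ltP; exists ((P1 `|` Q1) `|` (P2 `|` Q2) `|` (P3 `|` Q3)), set0; split.
- by apply: measurableU; [apply: measurableU|]; apply: measurableU.
- exact: measurable0.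
- apply/rr_zero_iff; move/rr_zero_iff: z1 => z1; move/rr_zero_iff: z2 => z2.
  move/rr_zero_iff: z3 => z3.
  apply: filterS3 z1 z2 z3 => x h1 h2 h3 nP _; apply: H.
  + by apply: h1 => p; apply: nP; left; left; [left|right].
  + by apply: h2 => p; apply: nP; left; right; [left|right].
  + by apply: h3 => p; apply: nP; right; [left|right].
- rewrite measure0 adde0 !EFinD.
  apply: (le_lt_trans (measureU2 _ _ _)).
  + by apply: measurableU; apply: measurableU.
  + by apply: measurableU.
  apply: lteD; last by apply: le_lt_trans _ l3; exact: measureU2.
  apply: (le_lt_trans (measureU2 _ _ _)); first by apply: measurableU.
    by apply: measurableU.
  apply: lteD; apply: le_lt_trans _ (l1) || apply: le_lt_trans _ (l2);
  exact: measureU2.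
Qed.


Lemma iota_sub (a b : cp_car R X G) : iota (cp_sub a b) = rr_sub (iota a) (iota b).
Proof. by rewrite /iota_incl /cp_sub /rr_sub map_cat -!map_comp. Qed.

Lemma iota_cat (a b : cp_car R X G) : iota (a ++ b) = iota a ++ iota b.
Proof. by rewrite /iota_incl map_cat. Qed.

Lemma rho_image (HA : mp_action mu rho) g (B : set X) :
  rho g @` B = rho (g^-1)%g @^-1` B.
Proof.
apply/seteqP; split => x.
- by move=> [y By <-]; rewrite /= rho_K.
- by move=> /= Bx; exists (rho g^-1 x)%g => //; rewrite rho_Kv.
Qed.

Lemma iota_valid (HA : mp_action mu rho) (xi : cp_car R X G) :
  @lm_valid _ _ _ (cp_mod mu G) xi -> @lm_valid _ _ _ (rr_mod mu rho) (iota xi).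
Proof.
move=> v p /mapP [q qin ->]; split; first exact: (v q qin).
have [_ _ mr pr] := HA.
split.
- exact: measurableT.
- exact: mr.
- move=> x y _ _ /= e; by rewrite -(rho_K HA q.1 x) e rho_K.
- move=> B mB _; rewrite rho_image //; split.
  + by rewrite -[_ @^-1` _]setTI; apply: mr.
  + exact: pr.
- by move=> x _; exists q.1.
Qed.



Lemma ind1 (S : set X) x : S x -> \1_S x = 1 :> R.
Proof. by move=> Sx; rewrite indicE mem_set. Qed.

Lemma ind0 (S : set X) x : ~ S x -> \1_S x = 0 :> R.
Proof. by move=> Sx; rewrite indicE memNset. Qed.

Section Single.
Variables (phi : X -> X) (A : set X) (f : X -> C) (en : nat -> G).

Definition Ag n := [set y | A y /\ phi y = rho (en n) y].
Definition Cn N := [set y | exists2 k, (k < N)%N & Ag k y].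
Definition Bn n := Ag n `\` Cn n.
Definition cf n (x : X) : C :=
  Complex (complex.Re (f x) * \1_(phi @` Bn n) x) (complex.Im (f x) * \1_(phi @` Bn n) x).
Definition sN N : cp_car R X G := mkseq (fun n => (en n, cf n)) N.

Lemma Cn0 : Cn 0 = set0.
Proof. by apply/seteqP; split => y // [k]. Qed.

Lemma CnS N : Cn N.+1 = Cn N `|` Ag N.
Proof.
apply/seteqP; split => y.
- move=> [k]; rewrite ltnS leq_eqVlt => /orP[/eqP->|kN] Ak; [right|left] => //.
  by exists k.
- by move=> [[k kN Ak]|AN]; [exists k => //; rewrite ltnS ltnW|exists N].
Qed.

Lemma Bn_sub n : Bn n `<=` A.
Proof. by move=> y [[]]. Qed.

Lemma Cn_Bn N y : Cn N y -> exists2 m, (m < N)%N & Bn m y.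
Proof.
elim: N => [|N ih]; first by rewrite Cn0.
rewrite CnS => -[/ih [m mN Bm]|AN]; first by exists m => //; rewrite ltnS ltnW.
have [/ih [m mN Bm]|nC] := pselect (Cn N y); first by exists m => //; rewrite ltnS ltnW.
by exists N.
Qed.

Lemma Bn_disj n m y : Bn n y -> Bn m y -> n = m.
Proof.
move=> [An nCn] [Am nCm]; case: (ltngtP n m) => // nm.
- by case: nCm; exists n.
- by case: nCn; exists m.
Qed.

Lemma Ag_Cn N n y : (n < N)%N -> Ag n y -> Cn N y.
Proof. by move=> nN An; exists n. Qed.

Lemma Cn_sub N : Cn N `<=` A.
Proof. by move=> y [k _ []]. Qed.

Lemma Ag_meas (SB : standard_borel R X) (HA : mp_action mu rho)
  (PI : partial_iso mu rho phi A) n : measurable (Ag n).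
Proof.
have [e [ei [me _]]] := SB.
have [mA mphi _ _ _] := PI.
have [_ _ mr _] := HA.
have -> : Ag n = A `&` (fun y => e (phi y) - e (rho (en n) y)) @^-1` [set 0].
  apply/seteqP; split => y.
  - by move=> [Ay e1]; split => //=; rewrite e1 subrr.
  - move=> [Ay /= /eqP]; rewrite subr_eq0 => /eqP h; split => //.
    exact: ei.
apply: (_ : measurable_fun A (fun y => e (phi y) - e (rho (en n) y))) => //.
apply: measurable_funB.
- exact: (measurable_comp measurableT (subsetT _) me mphi).
- exact: (measurable_comp measurableT (subsetT _) me
    (measurable_funS measurableT (subsetT _) (mr (en n)))).
Qed.


Lemma Cn_meas (SB : standard_borel R X) (HA : mp_action mu rho)
  (PI : partial_iso mu rho phi A) N : measurable (Cn N).
Proof.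
elim: N => [|N ih]; first by rewrite Cn0; exact: measurable0.
by rewrite CnS; apply: measurableU => //; exact: Ag_meas.
Qed.

Lemma Bn_meas (SB : standard_borel R X) (HA : mp_action mu rho)
  (PI : partial_iso mu rho phi A) n : measurable (Bn n).
Proof. by apply: measurableD; [exact: Ag_meas|exact: Cn_meas]. Qed.

Lemma kernel_single (HA : mp_action mu rho) (PI : partial_iso mu rho phi A) N x :
  ~ (phi @` (A `\` Cn N)) x ->
  forall y, K (rr_sub [:: (f, (phi, A))] (iota (sN N))) x y = 0.
Proof.
move=> nD y; rewrite K_sub.
have -> : K [:: (f, (phi, A))] x y = if `[< A y /\ phi y = x >] then f x else 0.
  by rewrite /rr_kernel big_seq1.
have -> : K (iota (sN N)) x y =
    \sum_(n <- seq.iota 0 N) (if `[< True /\ rho (en n) y = x >] then cf n x else 0).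
  by rewrite /rr_kernel /iota_incl /sN /mkseq -map_comp big_map.
have [_ _ inj _ _] := PI.
case: asboolP => [[Ay e1]|nA].
- have Cy : Cn N y by apply: contrapT => nC; apply: nD; exists y.
  have [m mN Bm] := Cn_Bn _ _ Cy.
  rewrite (bigD1_seq m) ?mem_iota ?iota_uniq //= big1 => [|n nm].
  + rewrite addr0; case: asboolP => [_|[]]; last first.
      by split => //; rewrite -e1 Bm.1.2.
    rewrite /cf ind1; last by exists y.
    by rewrite !mulr1; case: (f x) => a b /=; rewrite subrr.
  + case: asboolP => // -[_ e2]; rewrite /cf ind0 ?mulr0 //.
    move=> [y' By' e3].
    have yy : y' = y.
      by apply: inj => //; [exact: Bn_sub By'|rewrite e3 e1].
    by move: nm; rewrite yy in By'; rewrite (Bn_disj _ _ _ By' Bm) eqxx.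
- rewrite big1 ?subrr // => n _; case: asboolP => // -[_ e2].
  rewrite /cf ind0 ?mulr0 //.
  move=> [y' [[Ay' e4] _] e3]; apply: nA.
  have yy : y' = y by rewrite -(rho_K HA (en n) y') -e4 e3 -e2 rho_K.
  by rewrite -yy.
Qed.

Lemma small_rest (SB : standard_borel R X) (HA : mp_action mu rho)
  (PI : partial_iso mu rho phi A) (ensurj : forall g, exists n, en n = g)
  (e : R) : 0 < e -> exists N, (mu (A `\` Cn N) < e%:E)%E.
Proof.
move=> e0; apply: contrapT => nex.
have [mA _ _ _ orb] := PI.
have mF n : measurable (A `\` Cn n) by apply: measurableD => //; exact: Cn_meas.
have cap : \bigcap_n (A `\` Cn n) = set0.
  apply/seteqP; split => y // hy.
  have [Ay _] := hy 0%N (I : setT 0%N).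
  have [g eg] := orb y Ay; have [k ek] := ensurj g.
  have [_ nC] := hy k.+1 (I : setT k.+1).
  by apply: nC; exists k => //; split => //; rewrite ek.
have := @nonincreasing_cvg_mu _ _ _ mu (fun n => A `\` Cn n).
rewrite cap measure0 => /(_ _ mF measurable0) cv.
have : (e%:E <= 0)%E.
  apply: (cvge_to_ge (cv _ _)).
  - apply: le_lt_trans (probability_le1 _ _) _ => //; exact: ltey.
  - move=> n m nm; apply/subsetPset => y [Ay nC]; split => // -[k kn Ak].
    by apply: nC; exists k => //; apply: leq_trans kn nm.
  - apply: nearW => n; rewrite leNgt; apply/negP => lt; apply: nex; by exists n.
by rewrite lee_fin leNgt e0.
Qed.

Lemma cf_Linf (SB : standard_borel R X) (HA : mp_action mu rho)
  (PI : partial_iso mu rho phi A) (Lf : Linf f) n : Linf (cf n).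
Proof.
have [_ _ _ pim _] := PI.
have mS : measurable (phi @` Bn n).
  exact: (pim _ (Bn_meas SB HA PI n) (@Bn_sub n)).1.
have [LRe [LIm [M hM]]] := Lf.
split; [|split].
- rewrite /cf /=; exact: (measurable_funM LRe (@measurable_indic _ _ R setT _ mS)).
- rewrite /cf /=; exact: (measurable_funM LIm (@measurable_indic _ _ R setT _ mS)).
- exists M => x; rewrite /cf /=.
  have [Sx|nS] := pselect ((phi @` Bn n) x).
  + by rewrite ind1 // !mulr1; exact: hM.
  + have h0 : 0 <= M by apply: le_trans (normr_ge0 _) (hM x).1.
    by rewrite ind0 // !mulr0 normr0.
Qed.
End Single.

Lemma approx_single (SB : standard_borel R X) (CG : countable [set: G])
  (HA : mp_action mu rho) (HF : free_action rho) (f : X -> C) phi A :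
  Linf f -> partial_iso mu rho phi A -> forall e : R, 0 < e ->
  exists s : cp_car R X G, @lm_valid _ _ _ (cp_mod mu G) s /\
    (rkR (rr_sub [:: (f, (phi, A))] (iota s)) < e%:E)%E.
Proof.
move=> Lf PI e e0.
have [h hinj] := countable_injP _ CG.
pose en n := match pselect (exists g, h g = n) with
  | left p => proj1_sig (cid p) | right _ => 1%g end.
have ensurj : forall g, exists n, en n = g.
  move=> g; exists (h g); rewrite /en; case: pselect => [p|np].
  - apply: hinj; rewrite ?in_setE //; exact: (proj2_sig (cid p)).
  - by case: np; exists g.
have [N hN] := small_rest _ _ _ SB HA PI ensurj _ e0.
have [mA _ _ pim _] := PI.
have subA : A `\` Cn phi A en N `<=` A by move=> y [].
have mD : measurable (A `\` Cn phi A en N).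
  by apply: measurableD => //; exact: Cn_meas.
exists (sN phi A f en N); split.
- move=> p; rewrite /sN /mkseq => /mapP [n _ ->] /=.
  exact: cf_Linf.
- apply/rank_ltP; exists (phi @` (A `\` Cn phi A en N)), set0; split.
  + exact: (pim _ mD subA).1.
  + exact: measurable0.
  + apply/rr_zero_iff; apply: aeW => x nP _.
    exact: kernel_single.
  + by rewrite measure0 adde0 (pim _ mD subA).2.
Qed.

Lemma approx (SB : standard_borel R X) (CG : countable [set: G])
  (HA : mp_action mu rho) (HF : free_action rho) (u : rr_car R X) :
  @lm_valid _ _ _ (rr_mod mu rho) u -> forall e : R, 0 < e ->
  exists s : cp_car R X G, @lm_valid _ _ _ (cp_mod mu G) s /\
    (rkR (rr_sub u (iota s)) < e%:E)%E.
Proof.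
elim: u => [|p u ih] uv e e0.
- exists [::]; split => // ; apply/rank_ltP; exists set0, set0; split.
  + exact: measurable0.
  + exact: measurable0.
  + by apply/rr_zero_iff; apply: aeW => x _ _ y; rewrite /rr_kernel big_nil.
  + by rewrite measure0 adde0 lte_fin.
- move: uv ih; case: p => f [phi A] uv ih.
  have [Lf PI] := uv _ (mem_head _ _).
  have e20 : 0 < e / 2 by rewrite divr_gt0.
  have [s1 [v1 r1]] := approx_single SB CG HA HF f phi A Lf PI _ e20.
  have [s2 [v2 r2]] : exists s : cp_car R X G, @lm_valid _ _ _ (cp_mod mu G) s /\
      (rkR (rr_sub u (iota s)) < (e / 2)%:E)%E.
    by apply: ih => // q qin; apply: uv; rewrite inE qin orbT.
  exists (s1 ++ s2); split.
  + by move=> q; rewrite mem_cat => /orP[/v1|/v2].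
  + have -> : e = e / 2 + e / 2 by field.
    apply: rr_rank2 r1 r2 => x h1 h2 y.
    rewrite K_sub iota_cat K_cat K_cons; move: (h1 y) (h2 y); rewrite !K_sub.
    move=> /eqP; rewrite subr_eq0 => /eqP ->.
    move=> /eqP; rewrite subr_eq0 => /eqP ->.
    by rewrite opprD addrACA !subrr addr0.
Qed.

Lemma main_sec (SB : standard_borel R X) (CG : countable [set: G])
  (HA : mp_action mu rho) (HF : free_action rho) :
  completion_iso mu (cp_mod mu G) (rr_mod mu rho) iota.
Proof.
split.
- move=> s [sv sc]; split; first by move=> n; exact: (iota_valid HA (s n) (sv n)).
  move=> e e0; have [N hN] := sc e e0; exists N => n m hn hm.
  change (rkR (rr_sub (iota (s n)) (iota (s m))) < e%:E)%E.
  by rewrite -iota_sub rank_iota //; apply: hN.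
- move=> s t _ _ h e e0; have [N hN] := h e e0; exists N => n hn.
  change (rkR (rr_sub (iota (s n)) (iota (t n))) < e%:E)%E.
  by rewrite -iota_sub rank_iota //; apply: hN.
- move=> s t _ _ h e e0; have [N hN] := h e e0; exists N => n hn.
  have := hN n hn.
  change ((rkR (rr_sub (iota (s n)) (iota (t n))) < e%:E)%E -> (rkC (cp_sub (s n) (t n)) < e%:E)%E).
  by rewrite -iota_sub rank_iota.
- move=> u [uv uc].
  have ap n : exists s : cp_car R X G, @lm_valid _ _ _ (cp_mod mu G) s /\
      (rkR (rr_sub (u n) (iota s)) < (n.+1%:R^-1)%:E)%E.
    by apply: approx => //; rewrite invr_gt0.
  pose s n := proj1_sig (cid (ap n)).
  have hs n : @lm_valid _ _ _ (cp_mod mu G) (s n) /\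
      (rkR (rr_sub (u n) (iota (s n))) < (n.+1%:R^-1)%:E)%E.
    exact: (proj2_sig (cid (ap n))).
  have small e : 0 < e -> exists N, forall n, (N <= n)%N ->
      (rkR (rr_sub (u n) (iota (s n))) < e%:E)%E.
    move=> e0; have [N _ hN] := near_infty_natSinv_lt (PosNum e0).
    exists N => n hn; apply: (lt_trans (hs n).2).
    by rewrite lte_fin; apply: hN.
  exists s.
  + split; first by move=> n; exact: (hs n).1.
    move=> e e0.
    have e30 : 0 < e / 3 by rewrite divr_gt0.
    have [N0 hN0] := uc (e / 3) e30.
    have [N1 hN1] := small _ e30.
    exists (maxn N0 N1) => n m hn hm.
    change (rkC (cp_sub (s n) (s m)) < e%:E)%E.
    rewrite -rank_iota // iota_sub.
    have -> : e = e / 3 + e / 3 + e / 3 by field.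
    apply: (rr_rank3 (rr_sub (u n) (iota (s n))) (rr_sub (u n) (u m))
                     (rr_sub (u m) (iota (s m)))).
    * move=> x ha hb hc y; move: (ha y) (hb y) (hc y); rewrite !K_sub.
      move=> /eqP; rewrite subr_eq0 => /eqP h1.
      move=> /eqP; rewrite subr_eq0 => /eqP h2.
      move=> /eqP; rewrite subr_eq0 => /eqP h3.
      by rewrite -h1 h2 h3 subrr.
    * by apply: hN1; apply: leq_trans (leq_maxr N0 N1) hn.
    * by apply: hN0; [apply: leq_trans (leq_maxl N0 N1) hn|apply: leq_trans (leq_maxl N0 N1) hm].
    * by apply: hN1; apply: leq_trans (leq_maxr N0 N1) hm.
  + move=> e e0; have [N hN] := small _ e0; exists N => n hn.
    change (rkR (rr_sub (iota (s n)) (u n)) < e%:E)%E.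
    apply: (rr_rank1 (rr_sub (u n) (iota (s n)))); last exact: hN.
    move=> x ha y; move: (ha y); rewrite !K_sub => h.
    by rewrite -opprB h oppr0.
Qed.

End S.
Theorem proposition4p1 (R : realType) (d : measure_display)
  (X : measurableType d) (mu : probability X R)
  (G : groupType) (rho : G -> X -> X) :
  standard_borel R X ->
  countable [set: G] ->
  mp_action mu rho ->
  free_action rho ->
  completion_iso mu (cp_mod mu G) (rr_mod mu rho) (iota_incl rho).
Proof.
move=> SB CG HA HF; exact: (@main_sec R d X mu G rho SB CG HA HF).
Qed.
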